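(* Let $n\ge1$ and let $L$ be a simplicial complex on the ground set $[k]$. Then the matching $\mathcal{M}_L$ on the directed graph $G_L$ is acyclic, i.e. the directed graph obtained from $G_L$ by reversing the direction of every edge in $\mathcal{M}_L$ contains no directed cycle.
   Context: Give $D^n$ the regular CW structure with cells $e_-^i,e_+^i$ for $0\le i\le n-1$ (for each $i$, $e_\pm^i$ are the two open hemispheres of $S^i\subseteq S^{n-1}$, so the closure of $e_\pm^{i}$ is $e_\pm^i\cup\bigcup_{j<i}(e_-^j\cup e_+^j)$) together with the top cell $e_\bullet^n$ whose boundary is $S^{n-1}$. Give $(D^n)^k$ the product cell structure, with cells $c=c_1\times\dots\times c_k$. A simplicial complex $L$ on $[k]$ is a family of subsets of $[k]$ closed under taking subsets. For a cell $c$ let $\mathrm{supp}(c)=\{i: c_i=e_\bullet^n\}$; the polyhedral product $\mathcal{Z}_L(D^n,S^{n-1})$ is the subcomplex of $(D^n)^k$ consisting of the cells $c$ with $\mathrm{supp}(c)\in L$. $G_L$ is the directed graph whose vertices are these cells, with an edge $c\to c'$ whenever $c'$ lies in the closure of $c$ and $\dim c'=\dim c-1$. Let $\mathcal{M}$ be the set of edges $e_-^{i+1}\to e_+^i$ ($0\le i\le n-2$) and $e_\bullet^n\to e_+^{n-1}$ of the analogous graph for $D^n$. Define $\mathcal{M}_1=\{c\to c'\in G_L : c_1\to c'_1\in\mathcal{M}\}$ and, for $1\le j\le k-1$, $\mathcal{M}_{j+1}=\{c\to c'\in G_L: $ neither $c$ nor $c'$ belongs to an edge of $\mathcal{M}_1\cup\dots\cup\mathcal{M}_j$,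 and $c_{j+1}\to c'_{j+1}\in\mathcal{M}\}$. Set $\mathcal{M}_L=\bigcup_{j=1}^k\mathcal{M}_j$; this is a matching (each cell lies in at most one edge of $\mathcal{M}_L$). *)

(* Defs.v *)
From mathcomp Require Import all_boot.
Set Implicit Arguments. Unset Strict Implicit. Unset Printing Implicit Defensive.

(* Cells of D^n:  None = e_bullet^n ;  Some (s, i) = e_s^i with s = true for '+',
   s = false for '-', i : 'I_n (so 0 <= i <= n-1). *)
Definition cellD (n : nat) := option (bool * 'I_n).

Definition dimD n (c : cellD n) : nat :=
  match c with None => n | Some (_, i) => val i end.

Definition closD n (c c' : cellD n) : bool :=
  match c with
  | None => true
  | Some (_, i) =>
      match c' with
      | None => false
      | Some (_, i') => (val i' < val i) || (c' == c)
      end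
  end.

Definition MD n (c c' : cellD n) : bool :=
  match c, c' with
  | Some (false, i), Some (true, i') => val i == (val i').+1
  | None, Some (true, i') => val i' == n.-1
  | _, _ => false
  end.

Definition cellP (n k : nat) := {ffun 'I_k -> cellD n}.

Definition dimP n k (c : cellP n k) : nat := \sum_(t < k) dimD (c t).

Definition closP n k (c c' : cellP n k) : bool := [forall t, closD (c t) (c' t)].

Definition supp n k (c : cellP n k) : {set 'I_k} := [set t | c t == None].

Definition simplicial_complex k (L : {set {set 'I_k}}) : Prop :=
  forall s t : {set 'I_k}, s \in L -> t \subset s -> t \in L.

Definition GLvert n k (L : {set {set 'I_k}}) (c : cellP n k) : bool := supp c \in L.

Definition GLedge n k (L : {set {set 'I_k}}) (c c' : cellP n k) : bool :=
  [&& GLvert L c, GLvert L c', closP c c' & dimP c' + 1 == dimP c].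

Definition covered n k (U : rel (cellP n k)) (c : cellP n k) : bool :=
  [exists d, U c d || U d c].

(* New edges at (0-indexed) stage j, given the union U of the earlier stages:
   this is M_{j+1} in the paper (coordinate j+1 in 1-indexed notation). *)
Definition Mnew n k (L : {set {set 'I_k}}) (j : nat) (U : rel (cellP n k))
    (c c' : cellP n k) : bool :=
  [&& GLedge L c c', ~~ covered U c, ~~ covered U c' &
      [exists t : 'I_k, (val t == j) && MD (c t) (c' t)]].

(* MU j = M_1 \cup ... \cup M_j. *)
Fixpoint MU n k (L : {set {set 'I_k}}) (j : nat) : rel (cellP n k) :=
  match j with
  | 0 => fun _ _ => false
  | j'.+1 => fun c c' => MU L j' c c' || Mnew L j' (MU L j') c c'
  end.

Definition ML n k (L : {set {set 'I_k}}) : rel (cellP n k) := MU L k.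

Definition redge n k (L : {set {set 'I_k}}) (c c' : cellP n k) : bool :=
  (GLedge L c c' && ~~ ML L c c') || ML L c' c.

Definition acyclic_rel (T : Type) (e : rel T) : Prop :=
  forall (x : T) (p : seq T), path e x p -> last x p = x -> p = [::].

(* Main.v *)
Require Import Defs.
From mathcomp Require Import all_boot.
From mathcomp Require Import zify.
Set Implicit Arguments. Unset Strict Implicit. Unset Printing Implicit Defensive.

Definition notTrue n (v : cellD n) : bool :=
  if v is Some (true, _) then false else true.

Lemma MD_top n (x y : cellD n) : MD x y -> notTrue x && ~~ notTrue y.
Proof. by case: x => [[[] i]|]; case: y => [[[] i']|]. Qed.

Lemma MD_neq n (x y : cellD n) : MD x y -> x != y.
Proof. move/MD_top=> /andP[A B]; apply/eqP => E; subst y. by rewrite A in B. Qed.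

Lemma closD_le n (x y : cellD n) : closD x y -> dimD y <= dimD x.
Proof.
case: x => [[s i]|]; case: y => [[s' i']|] //=.
- by case/orP => [/ltnW //|/eqP [_ ->]].
- by move=> _; apply: ltnW.
Qed.

Lemma closD_eq n (x y : cellD n) : closD x y -> dimD y = dimD x -> x = y.
Proof.
case: x => [[s i]|]; case: y => [[s' i']|] //=.
- case/orP => [H E|/eqP -> //]. by rewrite E ltnn in H.
- move=> _ E. have := ltn_ord i'. by rewrite E ltnn.
Qed.

Lemma face_MD n (x y : cellD n) : notTrue x -> ~~ notTrue y -> closD x y ->
  dimD y + 1 = dimD x -> MD x y.
Proof.
case: x => [[[] i]|]; case: y => [[[] i']|] //=.
- move=> _ _ _ E. apply/eqP. lia.
- move=> _ _ _ E. apply/eqP. lia.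
Qed.

Section G.
Variables (n k : nat) (L : {set {set 'I_k}}).
Implicit Types c d : cellP n k.

Lemma GLedge_one c d : GLedge L c d ->
  exists t, (forall t', t' != t -> c t' = d t') /\ dimD (d t) + 1 = dimD (c t).
Proof.
case/and4P=> _ _ /forallP Hcl /eqP Hd.
have Hle t : dimD (d t) <= dimD (c t) by apply: closD_le.
pose del t := dimD (c t) - dimD (d t).
have Hs : \sum_(t < k) del t = 1.
  have : dimP c = dimP d + \sum_(t < k) del t.
    rewrite /dimP -big_split /=. apply: eq_bigr => t _. by rewrite subnKC.
  lia.
case: (pickP (fun t => 0 < del t)) => [t Ht|H]; last first.
  move: Hs; rewrite big1 // => t _. have := H t. simpl. lia.
exists t; split; last first.
  rewrite (bigD1 t) //= in Hs. rewrite /del in Ht Hs. have := Hle t. lia.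
move=> t' Ht'.
rewrite (bigD1 t) //= in Hs.
have H0 : \sum_(i < k | i != t) del i = 0.
  move: Ht Hs. set S := \sum_(i < k | i != t) del i. set D := del t. lia.
move/eqP: H0; rewrite sum_nat_eq0 => /forallP /(_ t') /implyP /(_ Ht') /eqP H0.
apply: closD_eq; first exact: Hcl.
have := Hle t'. rewrite /del in H0. lia.
Qed.

Lemma MU_mono j j' c d : j <= j' -> MU L j c d -> MU L j' c d.
Proof.
elim: j' => [|j' IH] Hj H.
  by move: Hj; rewrite leqn0 => /eqP Ej; subst j.
rewrite leq_eqVlt in Hj; case/orP: Hj => [/eqP <- //|Hj].
by rewrite /= IH.
Qed.

Lemma MU_stage j c d : MU L j c d -> exists2 s, s < j & Mnew L s (MU L s) c d.
Proof.
elim: j => [//|j IH] /= /orP [/IH [s Hs H]|H].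
  by exists s => //; apply: ltnW.
by exists j.
Qed.

Lemma Mnew_MD s U c d : Mnew L s U c d -> exists t : 'I_k, val t = s /\ MD (c t) (d t).
Proof. by case/and4P=> _ _ _ /existsP [t /andP [/eqP E H]]; exists t. Qed.

Lemma Mnew_GL s U c d : Mnew L s U c d -> GLedge L c d.
Proof. by case/and4P. Qed.

Lemma Mnew_ML s c d : Mnew L s (MU L s) c d -> ML L c d.
Proof.
move=> H. have [t [Et _]] := Mnew_MD H.
apply: (@MU_mono s.+1); first by rewrite -Et ltn_ord.
by rewrite /= H orbT.
Qed.

Lemma ML_GL c d : ML L c d -> GLedge L c d.
Proof. by case/MU_stage=> s _ /Mnew_GL. Qed.

Lemma covered_mono j j' c : j <= j' -> covered (MU L j) c -> covered (MU L j') c.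
Proof.
move=> Hj /existsP [d /orP H]; apply/existsP; exists d.
by case: H => H; rewrite (MU_mono Hj H) ?orbT.
Qed.

Lemma noUU (x y z : cellP n k) : ML L y x -> ML L z y -> False.
Proof.
case/MU_stage=> s _ H1; case/MU_stage=> s' _ H2.
case: (ltngtP s s') => E.
- case/and4P: H2 => _ _ /negP C _; apply: C.
  apply/existsP; exists x.
  have HH : MU L s' y x by apply: (MU_mono E); rewrite /= H1 orbT.
  by rewrite HH.
- case/and4P: H1 => _ /negP C _ _; apply: C.
  apply/existsP; exists z.
  have HH : MU L s z y by apply: (MU_mono E); rewrite /= H2 orbT.
  by rewrite HH orbT.
- subst s'. have [t [Et Ht]] := Mnew_MD H1. have [t' [Et' Ht']] := Mnew_MD H2.
  have Ett : t = t' by apply: val_inj; rewrite Et Et'.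
  subst t'. move/MD_top: Ht => /andP [A _]. move/MD_top: Ht' => /andP [_ B].
  by rewrite A in B.
Qed.

End G.

Theorem proposition3p3 (n k : nat) (L : {set {set 'I_k}}) :
  0 < n -> simplicial_complex L -> acyclic_rel (redge (n:=n) L).
Proof.
move=> _ _ x p Hp Hl.
case: p Hp Hl => [//|y q] Hp Hl; exfalso.
set s := y :: q in Hp Hl.
set N := size s.
have N0 : 0 < N by [].
pose f i := nth x (x :: s) (i %% N).
have fmod i : f (i %% N) = f i by rewrite /f modn_mod.
have Hper i : f (i + N) = f i by rewrite /f modnDr.
have Hstep i : redge L (f i) (f i.+1).
  move/(pathP x): Hp => Hp.
  have Hr : i %% N < N by rewrite ltn_mod.
  have E1 : i.+1 %% N = (i %% N).+1 %% N by rewrite -addn1 -modnDml addn1.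
  rewrite /f E1.
  have : redge L (nth x (x :: s) (i %% N)) (nth x (x :: s) (i %% N).+1) := Hp _ Hr.
  case: (ltnP (i %% N).+1 N) => H.
    by rewrite (modn_small H).
  have EN : (i %% N).+1 = N by apply/eqP; rewrite eqn_leq H Hr.
  rewrite EN modnn.
  have -> : nth x (x :: s) N = x.
    transitivity (last x (x :: s)); last exact: Hl.
    by rewrite -nth_last.
  move=> Hh; exact: Hh.
pose up i := ML L (f i.+1) (f i).
have Hdown i : ~~ up i -> GLedge L (f i) (f i.+1) && ~~ ML L (f i) (f i.+1).
  move=> Hn; move: (Hstep i); by rewrite /redge (negbTE (Hn : ~~ ML L (f i.+1) (f i))) orbF.
have Hdim i : if up i then dimP (f i.+1) = dimP (f i) + 1
              else dimP (f i) = dimP (f i.+1) + 1.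
  case E: (up i).
    by have /and4P [_ _ _ /eqP ->] := ML_GL E.
  by have /andP [/and4P [_ _ _ /eqP ->] _] := Hdown i (negbT E).
have noUU' i : up i -> up i.+1 -> False.
  by move=> H1 H2; apply: (noUU H1 H2).
have noDD m : ~~ up m -> ~~ up m.+1 -> False.
  move=> D1 D2.
  pose h i := dimP (f i).
  pose base := h m.+2.
  have Hm : h m = base + 2.
    have := Hdim m; have := Hdim m.+1. rewrite (negbTE D1) (negbTE D2) /base /h. lia.
  have Inv r : h (m.+2 + r) <= base \/ (h (m.+2 + r) = base + 1 /\ up (m.+1 + r)).
    elim: r => [|r IH]; first by left; rewrite addn0.
    have E1 : m.+2 + r.+1 = (m.+2 + r).+1 by rewrite addnS.
    have E2 : m.+1 + r.+1 = m.+2 + r by rewrite addnS addSn.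
    rewrite E1 E2. have E3 : m.+1 + r = (m.+2 + r).-1 by rewrite addSn.
    rewrite E3 in IH.
    set i := m.+2 + r in IH *.
    have Hi : 0 < i by rewrite /i addSn.
    have := Hdim i. rewrite /h in IH *.
    case E: (up i) => Hd.
      case: IH => [Hl'|[Hb Hu]].
        case: (ltngtP (dimP (f i)) base) => Hc.
        - left. lia.
        - lia.
        - right. split; first lia. by [].
      exfalso. apply: (noUU' i.-1); by rewrite ?prednK.
    left. case: IH => [Hl'|[Hb _]]; lia.
  have := Inv (N * 2 - 2). rewrite (_ : m.+2 + (N * 2 - 2) = (m + N) + N); last lia.
  rewrite /h !Hper -/(h m) Hm. case; first lia. case. lia.
have [i1 Hi1] : exists i, up i.
  case: (pickP (fun i : 'I_N => up i)) => [i Hi|H]; first by exists i.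
  have Hd r : r <= N -> dimP (f r) + r = dimP (f 0).
    elim: r => [|r IH] Hr; first by rewrite addn0.
    have := Hdim r. have := H (Ordinal Hr). rewrite /= => ->.
    rewrite -IH; last exact: ltnW. lia.
  have := Hd N (leqnn N). rewrite -{1}[N]add0n Hper. lia.
pose P st := [exists i : 'I_N, Mnew L st (MU L st) (f i.+1) (f i)].
have upP i st : Mnew L st (MU L st) (f i.+1) (f i) -> P st.
  move=> H; apply/existsP; exists (Ordinal (ltn_pmod i N0)) => /=.
  have E1 : (i %% N).+1 = ((i %% N).+1 %% N) + N * ((i %% N).+1 %/ N).
    by rewrite addnC mulnC -divn_eq.
  rewrite fmod.
  have -> : f (i %% N).+1 = f i.+1.
    by rewrite /f; congr nth; rewrite -[in RHS]addn1 -modnDml addn1.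
  exact: H.
have exP : exists st, P st.
  have [st _ H] := MU_stage Hi1. by exists st; apply: upP H.
pose j := ex_minn exP.
have [Pj jmin] : P j /\ forall st, P st -> j <= st.
  rewrite /j; case: ex_minnP => m Pm Hm; split=> //.
have stage_ge i : up i -> exists2 st, j <= st & Mnew L st (MU L st) (f i.+1) (f i).
  move=> H. have [st _ Hs] := MU_stage H. exists st => //. apply: jmin. exact: upP Hs.
have [i0 Hi0] := existsP Pj.
have [t0 [Et0 Ht0]] := Mnew_MD Hi0.
have Inv r : notTrue (f (i0.+1 + r) t0).
  elim: r => [|r IH].
    by rewrite addn0; case/andP: (MD_top Ht0).
  rewrite addnS. set m := i0.+1 + r in IH *.
  case E: (up m).
    have [st Hjs Hs] := stage_ge _ E.
    have [t1 [Et1 Ht1]] := Mnew_MD Hs.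
    case: (eqVneq t1 t0) => [Ett|Ntt].
      by subst t1; case/andP: (MD_top Ht1).
    have [t [Ht Hdt]] := GLedge_one (Mnew_GL Hs).
    have Et1t : t1 = t.
      apply/eqP; apply: contraT => Hne. have := Ht _ Hne.
      by move/eqP; rewrite (negbTE (MD_neq Ht1)).
    subst t1. by rewrite (Ht t0) // eq_sym.
  have /andP [HG HnML] := Hdown m (negbT E).
  have [t [Ht Hdt]] := GLedge_one HG.
  case: (eqVneq t0 t) => [Et|Nt]; last by rewrite -(Ht _ Nt).
  subst t.
  case NT: (notTrue (f m.+1 t0)) => //.
  have HMD : MD (f m t0) (f m.+1 t0).
    apply: face_MD => //; first by rewrite NT.
    by case/and4P: HG => _ _ /forallP.
  exfalso; move/negP: HnML; apply.
  apply: (@Mnew_ML _ _ _ j).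
  have Upm1 : up (i0 + r).
    apply: contraT => Hn. exfalso; apply: (noDD _ Hn). by rewrite -addSn -/m E.
  have Upm2 : up m.+1.
    apply: contraT => Hn. exfalso; apply: (noDD m) => //; by rewrite E.
  apply/and4P; split => //.
  - have [st Hjs Hs] := stage_ge _ Upm1.
    rewrite -addSn -/m in Hs.
    case/and4P: Hs => _ Hc _ _.
    by apply: contra Hc; apply: covered_mono.
  - have [st Hjs Hs] := stage_ge _ Upm2.
    case/and4P: Hs => _ _ Hc _.
    by apply: contra Hc; apply: covered_mono.
  - by apply/existsP; exists t0; rewrite Et0 eqxx HMD.
have := Inv N.-1. rewrite addSnnS prednK // Hper.
by case/andP: (MD_top Ht0) => _ /negbTE ->.
Qed.
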